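(* Let $X$ be the Cartwright–Steger surface. Suppose $D$ is a divisor on $X$, not necessarily effective, with $K_X\cdot D=2$ and $D^2=0$. Then $D$ is numerically equivalent to one of the two $\mathbb{Q}$-divisors $$D_I=\tfrac19(E_1-E_3+2C_1)\ \ (\text{numerically } \tfrac19(2E_3+C_1-C_2)),\qquad D_{II}=\tfrac19(-E_1+5E_3-2C_1)\ \ (\text{numerically }\tfrac19(2E_3-C_1+C_2)).$$ Equivalently, $(D\cdot E_1,D\cdot E_3,D\cdot C_1)\in\{(2,2,0),(2,2,4)\}$.
   Context: The Cartwright–Steger surface $X$ is the compact arithmetic complex ball quotient of Cartwright–Steger: minimal of general type, $p_g=q=1$, $K_X^2=9$, $H^2(X,\mathbb{Z})\cong\mathbb{Z}^5$ torsion free, and $\mathrm{NS}(X)$ free of rank 3. $X$ contains irreducible totally geodesic curves $E_1,E_2,E_3$ (geometric genus 4), $C_1,C_2$ (geometric genus 4), $C_3,C_4$ (geometric genus 10) (the preimages of the two branch curves of the Deligne–Mostow quotient $\mathbb{P}(1,2,3)$), with intersection numbers (rows/columns in the order $E_1,E_2,E_3,C_1,C_2,C_3,C_4$): $$\begin{pmatrix}5&13&9&11&11&25&25\\13&5&9&7&7&29&29\\9&9&9&9&9&27&27\\11&7&9&-1&17&37&19\\11&7&9&17&-1&19&37\\25&29&27&37&19&71&89\\25&29&27&19&37&89&71\end{pmatrix}.$$ $K_X$ is numerically equivalent to $E_3$, and $3E_3$ is numerically equivalent to $E_1+C_1+C_2$. The classes of $E_1,E_3,C_1$ form a $\mathbb{Q}$-basis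 of $\mathrm{NS}(X)\otimes\mathbb{Q}$. *)

(* Defs.v *)
From HB Require Import structures.
From mathcomp Require Import all_boot all_order all_algebra.
Set Implicit Arguments. Unset Strict Implicit. Unset Printing Implicit Defensive.
Import Order.TTheory GRing.Theory Num.Theory.
Local Open Scope ring_scope.

(* Intersection matrix of the curves E1,E2,E3,C1,C2,C3,C4 (in this order). *)
Definition CS_matrix : seq (seq int) :=
  [:: [:: 5; 13; 9; 11; 11; 25; 25];
      [:: 13; 5; 9; 7; 7; 29; 29];
      [:: 9; 9; 9; 9; 9; 27; 27];
      [:: 11; 7; 9; -1; 17; 37; 19];
      [:: 11; 7; 9; 17; -1; 19; 37];
      [:: 25; 29; 27; 37; 19; 71; 89];
      [:: 25; 29; 27; 19; 37; 89; 71]].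

Definition CS_int (i j : 'I_7) : int := nth 0 (nth [::] CS_matrix i) j.

Record CS_surface := {
  Div : zmodType;
  dot : Div -> Div -> int;
  dotC : forall x y, dot x y = dot y x;
  dotDl : forall x y z, dot (x + y) z = dot x z + dot y z;
  KX : Div;
  crv : 'I_7 -> Div;
  crv_dot : forall i j, dot (crv i) (crv j) = CS_int i j
}.

Section Names.
Variable X : CS_surface.
Definition E1 := crv X (@Ordinal 7 0 isT).
Definition E2 := crv X (@Ordinal 7 1 isT).
Definition E3 := crv X (@Ordinal 7 2 isT).
Definition C1 := crv X (@Ordinal 7 3 isT).
Definition C2 := crv X (@Ordinal 7 4 isT).
Definition C3 := crv X (@Ordinal 7 5 isT).
Definition C4 := crv X (@Ordinal 7 6 isT).
End Names.

Definition num_equiv (X : CS_surface) (D D' : Div X) : Prop :=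
  forall F : Div X, dot D F = dot D' F.

(* The standing facts about X: K_X == E3 and 3E3 == E1 + C1 + C2 numerically,
   and NS(X) (x) Q has Q-basis the classes of E1, E3, C1: every divisor has a
   nonzero integer multiple numerically equivalent to an integer combination
   of E1, E3, C1.  (Linear independence follows from the intersection matrix.) *)
Definition is_Cartwright_Steger (X : CS_surface) : Prop :=
  [/\ num_equiv (KX X) (E3 X),
      num_equiv (E3 X *+ 3) (E1 X + C1 X + C2 X) &
      forall D : Div X, exists n : int, n != 0 /\
        exists a b c : int, forall F : Div X,
          n * dot D F = a * dot (E1 X) F + b * dot (E3 X) F + c * dot (C1 X) F].

Definition num_equiv_Q9 (X : CS_surface) (D : Div X) (a b c : int) : Prop :=
  forall F : Div X, (dot D F)%:~R =
    (1 / 9 : rat) * (a * dot (E1 X) F + b * dot (E3 X) F + c * dot (C1 X) F)%:~R.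

(* Main.v *)
Require Import Defs.
From HB Require Import structures.
From mathcomp Require Import all_boot all_order all_algebra.
From mathcomp Require Import zify ring.
Import GRing.Theory Num.Theory.
Local Open Scope ring_scope.

Lemma q9 (d k : int) : 9 * d = k -> (d%:~R : rat) = 1/9 * k%:~R.
Proof.
move=> <-; rewrite intrM.
change ((9:int)%:~R : rat) with (9%:R : rat).
by rewrite mulrA div1r mulVf // mul1r.
Qed.

Theorem mainTheorem4 (X : CS_surface) (hX : is_Cartwright_Steger X) (D : Div X) :
  dot (KX X) D = 2 -> dot D D = 0 ->
  [/\ num_equiv_Q9 D 1 (-1) 2, dot D (E1 X) = 2, dot D (E3 X) = 2 & dot D (C1 X) = 0]
  \/
  [/\ num_equiv_Q9 D (-1) 5 (-2), dot D (E1 X) = 2, dot D (E3 X) = 2 & dot D (C1 X) = 4].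
Proof.
move=> HK HD; case: hX => hK _ hB.
have [n [n0 [a [b [c H]]]]] := hB D.
have hy : dot D (E3 X) = 2 by rewrite dotC -hK.
have h1 := H (E1 X); have h3 := H (E3 X); have h4 := H (C1 X); have hd := H D.
rewrite /E1 /E3 /C1 !crv_dot /CS_int /= in h1 h3 h4.
rewrite HD mulr0 ![dot _ D]dotC in hd.
rewrite -/(E1 X) -/(E3 X) -/(C1 X) in h1 h3 h4 hd.
move: h1 h3 h4 hd hy n0; set x := dot D (E1 X); set y := dot D (E3 X); set z := dot D (C1 X).
move=> h1 h3 h4 hd hy n0.
clearbody x y z.
have ha : 18 * a = n * (-5 * x + 6 * y - z) by lia.
have hb : 18 * b = n * (6 * x - 7 * y + 3 * z) by lia.
have hc : 18 * c = n * (- x + 3 * y - 2 * z) by lia.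
have e : (18*a)*x + (18*b)*y + (18*c)*z = 18 * (a * x + b * y + c * z) by ring.
rewrite -hd mulr0 in e.
rewrite ha hb hc hy in e.
have hQ : n * (5 * (x*x) + 2 * x * z + 2 * (z*z) - 24 * x - 12 * z + 28) = 0.
  apply/eqP; rewrite -oppr_eq0; apply/eqP; rewrite -e; ring.
have {}hQ : 5 * (x*x) + 2 * x * z + 2 * (z*z) - 24 * x - 12 * z + 28 = 0.
  by move/eqP: hQ; rewrite mulf_eq0 (negbTE n0) => /eqP.
have hs : (4*z+2*x-12)*(4*z+2*x-12) + (36*(x*x) - 144*x + 80) = 0.
  by rewrite -[RHS](mulr0 8) -hQ; ring.
have hsq : 0 <= (4*z+2*x-12)*(4*z+2*x-12) by rewrite -expr2 sqr_ge0.
have hx1 : 36*(x*x) - 144*x + 80 <= 0 by lia.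
move: ha hb hc; clear e hs hsq h1 h3 h4 hd.
have hx0 : 1 <= x by nia.

have hx3 : x <= 3 by nia.
have hx2 : x = 2.
  have : (x == 1) || (x == 2) || (x == 3) by lia.
  case/orP => [/orP[]|] /eqP hxv //; exfalso; rewrite hxv in hQ.
    have : 2 * (z * z - 5 * z + 4) = -1 by rewrite -[RHS](add0r (-1)) -hQ; ring.
    lia.
  have : 2 * (z * z - 3 * z) = -1 by rewrite -[RHS](add0r (-1)) -hQ; ring.
  lia.
have hz : 2 * (z * (z - 4)) = 0.
  by rewrite -hQ hx2; ring.
move=> ha hb hc.
have hz' : (z == 0) || (z == 4).
  by move/eqP: hz; rewrite !mulf_eq0 subr_eq0 /=.
rewrite hy hx2 in ha hb hc.
have gen : forall (p q r : int), 18 * a = n * p -> 18 * b = n * q -> 18 * c = n * r ->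
  forall F, 18 * n * dot D F = n * (p * dot (E1 X) F + q * dot (E3 X) F + r * dot (C1 X) F).
  move=> p q r hp hq hr F.
  have -> : 18 * n * dot D F = 18 * (n * dot D F) by ring.
  rewrite H.
  have -> : 18 * (a * dot (E1 X) F + b * dot (E3 X) F + c * dot (C1 X) F) =
    (18 * a) * dot (E1 X) F + (18 * b) * dot (E3 X) F + (18 * c) * dot (C1 X) F by ring.
  rewrite hp hq hr; ring.
case/orP: hz' => /eqP hzv; rewrite hzv in ha hb hc; [left|right]; split => //.
- move=> F.
  have key : 9 * dot D F = 1 * dot (E1 X) F + -1 * dot (E3 X) F + 2 * dot (C1 X) F.
    apply: (mulfI (_ : 2 * n != 0)); first by rewrite mulf_eq0 negb_or n0.
    have := gen _ _ _ ha hb hc F.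
    by move=> h; transitivity (18 * n * dot D F); [ring | rewrite h; ring].
  exact: q9.
- move=> F; apply: q9.
  apply: (mulfI (_ : 2 * n != 0)); first by rewrite mulf_eq0 negb_or n0.
  have := gen _ _ _ ha hb hc F.
  by move=> h; transitivity (18 * n * dot D F); [ring | rewrite h; ring].
Qed.
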